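(* Let $[x,y;z]$ be a geodesic of weight $w$ with complementary weight $w'$. Then $\rho([x,y;z])$ is a geodesic if and only if $G$ contains the $R$-linear map $\sigma:U\to U$ defined by $\sigma(x)=-y$ and $\sigma(z)=z-w'y$.
   Context: Let $R$ be a commutative ring, $U$ a free rank-$2$ $R$-module with non-degenerate symplectic pairing $\langle,\rangle$, $C$ an $R$-linear involution of $U$ of determinant $-1$, and $G\subseteq\mathrm{SL}(U)$ a subgroup containing $-1$ and stable under $g\mapsto CgC$. A basis vector is an element generating a direct summand. Let $\mathscr T$ be the set of triples $[x,y;z]$ of basis vectors with $\langle x,z\rangle=\langle z,y\rangle=1$ and $x+y=wz$ for some $w\in\{1,2\}$ (the weight); the complementary weight is $w'=3-w$. Define $\rho([x,y;z])=[z,z-w'x;y]\in\mathscr T$. A triple satisfies condition (c) if there is $g\in G$ with $Cg-1=w'\langle -,x\rangle y$ and $Cg+1=w'\langle -,y\rangle x$, where $\langle -,x\rangle y$ denotes $u\mapsto\langle u,x\rangle y$; this condition is invariant under $\rho^2$. A geodesic is a class in $\mathscr T/\langle\rho^2\rangle$ satisfying (c), and $\rho$ induces a map on $\mathscr T/\langle\rho^2\rangle$. *)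

(* Defs.v *)
From HB Require Import structures.
From mathcomp Require Import all_boot all_order all_algebra.
Set Implicit Arguments. Unset Strict Implicit. Unset Printing Implicit Defensive.
Import Order.TTheory GRing.Theory Num.Theory.
Local Open Scope ring_scope.

(* The free rank-2 module U is modelled (after choosing a basis) as column
   vectors 'cV[R]_2; R-linear endomorphisms of U are 2x2 matrices acting by
   left multiplication. *)

Definition pairing (R : comPzRingType) (B : 'M[R]_2) (u v : 'cV[R]_2) : R :=
  (u^T *m B *m v) 0 0.

(* A non-degenerate symplectic (alternating) pairing: <u,u> = 0 for all u,
   and the induced map U -> U^* is an isomorphism (B invertible: it has a two-sided inverse matrix). *)
Definition symplectic (R : comPzRingType) (B : 'M[R]_2) : Prop :=
  (forall u, pairing B u u = 0) /\ exists B' : 'M[R]_2, B *m B' = 1%:M /\ B' *m B = 1%:M.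

Definition SL_subgroup (R : comPzRingType) (G : 'M[R]_2 -> Prop) : Prop :=
  [/\ forall g, G g -> \det g = 1,
      G 1%:M,
      forall g h, G g -> G h -> G (g *m h)
    & forall g, G g -> exists h, [/\ G h, g *m h = 1%:M & h *m g = 1%:M]].

(* u is a basis vector: R u is a direct summand of U, i.e. R u is the image
   of an idempotent R-linear endomorphism of U. *)
Definition basis_vector (R : comPzRingType) (u : 'cV[R]_2) : Prop :=
  exists p : 'M[R]_2,
    p *m p = p /\ p *m u = u /\ forall v, exists r : R, p *m v = r *: u.

Record triple (R : comPzRingType) := Triple {
  tx : 'cV[R]_2; ty : 'cV[R]_2; tz : 'cV[R]_2; tw : nat }.

Definition is_triple (R : comPzRingType) (B : 'M[R]_2) (t : triple R) : Prop :=
  [/\ basis_vector (tx t) /\ basis_vector (ty t) /\ basis_vector (tz t),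
      pairing B (tx t) (tz t) = 1, pairing B (tz t) (ty t) = 1,
      (tw t = 1%N \/ tw t = 2%N)
    & tx t + ty t = (tw t)%:R *: tz t].

Definition cweight (R : comPzRingType) (t : triple R) : nat := (3 - tw t)%N.

Definition rho (R : comPzRingType) (t : triple R) : triple R :=
  Triple (tz t) (tz t - (cweight t)%:R *: tx t) (ty t) (cweight t).

Definition cond_c (R : comPzRingType) (B C : 'M[R]_2) (G : 'M[R]_2 -> Prop)
    (t : triple R) : Prop :=
  exists g, G g /\
    forall u : 'cV[R]_2,
      (C *m g) *m u - u = ((cweight t)%:R * pairing B u (tx t)) *: ty t /\
      (C *m g) *m u + u = ((cweight t)%:R * pairing B u (ty t)) *: tx t.

(* A triple whose rho^2-class is a geodesic ((c) is rho^2-invariant). *)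
Definition geodesic (R : comPzRingType) (B C : 'M[R]_2) (G : 'M[R]_2 -> Prop)
    (t : triple R) : Prop :=
  is_triple B t /\ cond_c B C G t.

(* Main.v *)
Require Import Defs.
From HB Require Import structures.
From mathcomp Require Import all_boot all_order all_algebra ring.
Import GRing.Theory.
Local Open Scope ring_scope.
Set Implicit Arguments. Unset Strict Implicit.

Lemma ord2P (i : 'I_2) : i = 0 \/ i = 1.
Proof. case: i => [[|[|//]] Hi]; [left|right]; exact: val_inj. Qed.

Lemma cvP (R : comPzRingType) (u v : 'cV[R]_2) :
  u 0 0 = v 0 0 -> u 1 0 = v 1 0 -> u = v.
Proof.
move=> h0 h1; apply/matrixP => i j; rewrite [j]ord1.
by case: (ord2P i) => ->.
Qed.

Lemma pair_expand (R : comPzRingType) (B : 'M[R]_2) u v :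
  pairing B u v = u 0 0 * (B 0 0 * v 0 0 + B 0 1 * v 1 0) + u 1 0 * (B 1 0 * v 0 0 + B 1 1 * v 1 0).
Proof.
rewrite /pairing !mxE !big_ord_recl !big_ord0 !mxE !big_ord_recl !big_ord0 !mxE /=.
have -> : lift ord0 ord0 = 1 :> 'I_2 by exact: val_inj.
ring.
Qed.

Section P.
Variables (R : comPzRingType) (B : 'M[R]_2).
Hypothesis alt : forall u, pairing B u u = 0.
Let P := pairing B.

Lemma pairE u v : P u v = B 0 1 * (u 0 0 * v 1 0 - u 1 0 * v 0 0).
Proof.
pose e (a b : R) : 'cV[R]_2 := \col_i (if i == 0 then a else b).
have e0 a b : e a b 0 0 = a by rewrite mxE.
have e1 a b : e a b 1 0 = b by rewrite mxE.
have h1 := alt (e 1 0); have h2 := alt (e 0 1); have h3 := alt (e 1 1).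
rewrite /P !pair_expand !e0 !e1 in h1 h2 h3 *.
have b00 : B 0 0 = 0 by rewrite -h1; ring.
have b11 : B 1 1 = 0 by rewrite -h2; ring.
rewrite b00 b11 in h3.
have b10 : B 1 0 = - B 0 1.
  apply/eqP; rewrite -subr_eq0 opprK -h3; apply/eqP; ring.
rewrite b00 b11 b10; ring.
Qed.
End P.

Section Lin.
Variables (R : comPzRingType) (B : 'M[R]_2).
Hypothesis alt : forall u, pairing B u u = 0.
Let P := pairing B.
Lemma P_subl u v t : P (u - v) t = P u t - P v t.
Proof. rewrite /P !(pairE alt) !mxE; ring. Qed.
Lemma P_subr u v t : P t (u - v) = P t u - P t v.
Proof. rewrite /P !(pairE alt) !mxE; ring. Qed.
Lemma P_addl u v t : P (u + v) t = P u t + P v t.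
Proof. rewrite /P !(pairE alt) !mxE; ring. Qed.
Lemma P_addr u v t : P t (u + v) = P t u + P t v.
Proof. rewrite /P !(pairE alt) !mxE; ring. Qed.
Lemma P_scalel a u t : P (a *: u) t = a * P u t.
Proof. rewrite /P !(pairE alt) !mxE; ring. Qed.
Lemma P_scaler a u t : P t (a *: u) = a * P t u.
Proof. rewrite /P !(pairE alt) !mxE; ring. Qed.
Lemma P_oppl u t : P (- u) t = - P u t.
Proof. rewrite /P !(pairE alt) !mxE; ring. Qed.
Lemma P_oppr u t : P t (- u) = - P t u.
Proof. rewrite /P !(pairE alt) !mxE; ring. Qed.
Lemma P_anti u v : P u v = - P v u.
Proof. rewrite /P !(pairE alt); ring. Qed.
Lemma P_dec x z u : P x z = 1 -> u = P u z *: x - P u x *: z.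
Proof.
rewrite /P => hxz; rewrite (pairE alt) in hxz.
apply: cvP; rewrite !mxE !(pairE alt); rewrite -[LHS]mulr1 -hxz; ring.
Qed.
End Lin.

Lemma col_mul1 (R : comPzRingType) (A : 'cV[R]_2) (c : 'M[R]_1) :
  A *m c = c 0 0 *: A.
Proof.
apply/matrixP => i j; rewrite [j]ord1 !mxE big_ord1 mulrC; by [].
Qed.

Theorem lemma4p1 (R : comPzRingType) (B C : 'M[R]_2) (G : 'M[R]_2 -> Prop)
    (x y z : 'cV[R]_2) (w : nat) :
  symplectic B ->
  C *m C = 1%:M -> \det C = -1 ->
  SL_subgroup G -> G (- 1%:M) ->
  (forall g, G g -> G (C *m g *m C)) ->
  geodesic B C G (Triple x y z w) ->
  (geodesic B C G (rho (Triple x y z w)) <->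
   exists sigma : 'M[R]_2,
     [/\ G sigma, sigma *m x = - y & sigma *m z = z - (3 - w)%:R *: y]).
Proof.
move=> [alt _] CC _ [_ _ GM Ginv] _ _ [[[bx [by' bz]] Pxz Pzy hw hs] [g [Gg Hg]]].
rewrite /cweight /= in Hg hs hw Pxz Pzy bx by' bz.
have hW3 : (3 - (3 - w))%N = w by case: hw => ->.
have hW' : ((3 - w)%:R : R) = 3 - w%:R by rewrite natrB //; case: hw => ->.
have Pzx : pairing B z x = -1 by rewrite (P_anti alt) Pxz.
have hy : y = w%:R *: z - x by rewrite -hs addrAC subrr add0r.
have Pyx : pairing B y x = - w%:R.
  by rewrite hy (P_subl alt) (P_scalel alt) Pzx alt; ring.
have Pyz : pairing B y z = -1 by rewrite (P_anti alt) Pzy.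
have fx : C *m g *m x = x.
  by have := (Hg x).1; rewrite alt mulr0 scale0r; move/eqP; rewrite subr_eq0 => /eqP.
have fz : C *m g *m z = z - (3 - w)%:R *: y.
  have := (Hg z).1; rewrite Pzx; move/eqP; rewrite subr_eq => /eqP ->.
  by rewrite mulrN1 scaleNr addrC.
have fy : C *m g *m y = - y.
  have := (Hg y).1; rewrite Pyx; move/eqP; rewrite subr_eq => /eqP ->.
  by rewrite ?hW3 ?hW'; case: hw => ->; apply: cvP; rewrite !mxE; ring.
have Cmove M u v : C *m M *m u = v -> M *m u = C *m v.
  by move<-; rewrite !mulmxA CC mul1mx.
have [g' [Gg' gg' g'g]] := Ginv g Gg.
have ginv u v : g *m u = v -> g' *m v = u.
  by move<-; rewrite mulmxA g'g mul1mx.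
split.
- move=> [_ [h [Gh Hh]]]; rewrite /rho /cweight /= in Hh.
  exists (g' *m h); split; first exact: GM.
  + have hx : C *m h *m x = y.
      have := (Hh x).1; rewrite Pxz mulr1; move/eqP; rewrite subr_eq => /eqP ->.
      by rewrite hy; rewrite ?hW3 ?hW'; case: hw => ->; apply: cvP; rewrite !mxE; ring.
    rewrite -mulmxA (Cmove _ _ _ _ _ hx); apply: ginv.
    by rewrite mulmxN (Cmove _ _ _ _ _ fy) mulmxN opprK.
  + have hz : C *m h *m z = z.
      by have := (Hh z).1; rewrite alt mulr0 scale0r; move/eqP; rewrite subr_eq0 => /eqP.
    rewrite -mulmxA (Cmove _ _ _ _ _ hz); apply: ginv; apply: Cmove.
    by rewrite mulmxBr -scalemxAr fz fy scalerN opprK subrK.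
- move=> [s [Gs sx sz]].
  have Pyv : pairing B y (z - (3 - w)%:R *: x) = 1.
    by rewrite (P_subr alt) (P_scaler alt) Pyz Pyx; rewrite ?hW3 ?hW'; case: hw => ->; ring.
  split.
  + rewrite /rho /cweight /=; split.
    * split; first exact: bz.
      split; last exact: by'.
      set v := z - _.
      set r := y^T *m B.
      have rv : v *m (r *m v) = v by rewrite col_mul1 -/(pairing B y v) Pyv scale1r.
      exists (v *m r); split; [|split].
      -- by rewrite -mulmxA [r *m (v *m r)]mulmxA mulmxA rv.
      -- by rewrite -mulmxA rv.
      -- by move=> u; exists (pairing B y u); rewrite -mulmxA col_mul1.
    * exact: Pzy.
    * exact: Pyv.
    * by case: hw => ->; [right|left].
    * by rewrite hy; rewrite ?hW3 ?hW'; case: hw => ->; apply: cvP; rewrite !mxE; ring.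
  + exists (g *m s); split; first exact: GM.
    move=> u; rewrite /rho /cweight /=.
    move: (P_dec alt u Pxz); move: (pairing B u z) (pairing B u x) => a c ->.
    have e : C *m (g *m s) *m (a *: x - c *: z) = a *: y - c *: z.
      rewrite mulmxA -(mulmxA (C *m g)) mulmxBr -!scalemxAr sx sz.
      rewrite mulmxBr -!scalemxAr mulmxBr mulmxN -!scalemxAr fz fy.
      by apply: cvP; rewrite !mxE; ring.
    rewrite e !(P_subl alt) !(P_scalel alt) !(P_subr alt) !(P_scaler alt) Pxz Pzx !alt.
    by rewrite hy; split; apply: cvP; rewrite !mxE; rewrite ?hW3 ?hW'; case: hw => ->; ring.
Qed.
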